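(* Let $\mu:\mathbb{R}^{n\times n}\to\mathbb{R}$ be the matrix measure induced by a vector norm $|\cdot|$ on $\mathbb{R}^n$, and suppose $\mu$ satisfies any one of the following (equivalent) conditions: (1) $|\cdot|$ is orthant-monotonic; (2) $\mu(-D)\le 0$ for every $D\in\mathbb{D}^n_{\ge0}$; (3) $\mu(D)=\max_i\{d_{ii}\}$ for every $D\in\mathbb{D}^n_{\ge0}$; (4) there exists $A\in\mathbb{R}^{n\times n}$ with $\mu(A-D)<0$ for all $D\in\mathbb{D}^n_{\ge0}$. Then $\mu(D)=\max_i\{d_{ii}\}$ for every diagonal matrix $D\in\mathbb{R}^{n\times n}$ (with arbitrary real diagonal entries).
   Context: $\mathbb{D}^n_{\ge 0}$ denotes the set of $n\times n$ diagonal matrices with nonnegative diagonal entries. For a vector norm $|\cdot|$ on $\mathbb{R}^n$, the induced matrix norm is $\|A\|=\max_{|x|=1}|Ax|$ and the induced matrix measure is $\mu(A)=\lim_{\varepsilon\to0^+}(\|I_n+\varepsilon A\|-1)/\varepsilon$. A norm $|\cdot|$ on $\mathbb{R}^n$ is orthant-monotonic if for all $x,y\in\mathbb{R}^n$: whenever $x_iy_i\ge 0$ and $|x_i|\le|y_i|$ for all $i$, then $|x|\le|y|$. *)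

(* Defs.v *)
From HB Require Import structures.
From mathcomp Require Import all_boot all_order all_algebra.
From mathcomp Require Import all_classical all_reals all_analysis.
Set Implicit Arguments. Unset Strict Implicit. Unset Printing Implicit Defensive.
Import Order.TTheory GRing.Theory Num.Theory.
Import numFieldNormedType.Exports.
Local Open Scope classical_set_scope.
Local Open Scope ring_scope.

Definition is_vnorm (R : realType) (n : nat) (N : 'cV[R]_n -> R) : Prop :=
  [/\ forall x, 0 <= N x,
      forall x, N x = 0 -> x = 0,
      forall (a : R) x, N (a *: x) = `|a| * N x
    & forall x y, N (x + y) <= N x + N y].

Definition induced_norm (R : realType) (n : nat) (N : 'cV[R]_n -> R)
  (A : 'M[R]_n) : R :=
  sup [set N (A *m x) | x in [set x : 'cV[R]_n | N x = 1]].

Definition matrix_measure (R : realType) (n : nat) (N : 'cV[R]_n -> R)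
  (A : 'M[R]_n) : R :=
  lim ((fun e : R => (induced_norm N (1%:M + e *: A) - 1) / e) @ 0^'+).

Definition orthant_monotonic (R : realType) (n : nat) (N : 'cV[R]_n -> R) : Prop :=
  forall x y : 'cV[R]_n,
    (forall i, 0 <= x i 0 * y i 0 /\ `|x i 0| <= `|y i 0|) -> N x <= N y.

(* D in D^n_{>=0}: diag_mx d with all entries of d nonnegative. *)
Definition nonneg_row (R : realType) (n : nat) (d : 'rV[R]_n) : Prop :=
  forall i, 0 <= d 0 i.

Definition max_entry (R : realType) (n : nat) (d : 'rV[R]_n.+1) : R :=
  \big[Num.max/d 0 ord0]_(i < n.+1) d 0 i.

(* Main.v *)
Require Import Defs.
From mathcomp Require Import all_boot all_order all_algebra.
From mathcomp Require Import all_classical all_reals all_analysis.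
From mathcomp Require Import ring lra.
Import Order.TTheory GRing.Theory Num.Theory.
Import numFieldNormedType.Exports.
Local Open Scope classical_set_scope.
Local Open Scope ring_scope.

Section S.
Variables (R : realType) (n : nat) (N : 'cV[R]_n.+1 -> R).
Hypothesis hN : is_vnorm N.

Let e_ (i : 'I_n.+1) : 'cV[R]_n.+1 := delta_mx i 0.

Lemma N_ge0 x : 0 <= N x. Proof. by case: hN. Qed.
Lemma N_eq0 x : N x = 0 -> x = 0. Proof. by case: hN => _ h _ _; apply: h. Qed.
Lemma NZ a x : N (a *: x) = `|a| * N x. Proof. by case: hN. Qed.
Lemma ND x y : N (x + y) <= N x + N y. Proof. by case: hN. Qed.
Lemma N0 : N 0 = 0. Proof. by rewrite -(scale0r (0 : 'cV[R]_n.+1)) NZ normr0 mul0r. Qed.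
Lemma NN x : N (- x) = N x. Proof. by rewrite -scaleN1r NZ normrN1 mul1r. Qed.
Lemma N_gt0 x : x != 0 -> 0 < N x.
Proof. move=> x0; rewrite lt_neqAle N_ge0 andbT eq_sym; apply/eqP => /N_eq0 h; by rewrite h eqxx in x0. Qed.

Lemma N_sum (I : Type) (r : seq I) (F : I -> 'cV[R]_n.+1) :
  N (\sum_(i <- r) F i) <= \sum_(i <- r) N (F i).
Proof.
elim: r => [|a r IH]; first by rewrite !big_nil N0.
rewrite !big_cons; apply: le_trans (ND _ _) _; exact: lerD.
Qed.

Definition Kup := \sum_i N (e_ i).

Lemma N_up x : N x <= \sum_i `|x i 0| * N (e_ i).
Proof.
have Hx : x = \sum_i x i 0 *: e_ i.
  apply/matrixP => i j; rewrite ord1 summxE (bigD1 i) //= big1 ?addr0.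
    by rewrite !mxE !eqxx mulr1.
  by move=> k ki; rewrite !mxE eq_sym (negbTE ki) mulr0.
rewrite {1}Hx; apply: le_trans (N_sum _ _ _) _; apply: ler_sum => i _; rewrite NZ.
by [].
Qed.

Lemma entry_le (v : 'rV[R]_n.+1) i : `|v 0 i| <= `|v|.
Proof.
by rewrite [leRHS]/Num.norm /= mx_normrE; apply/bigmax_geP; right => /=; exists (0, i).
Qed.

Let g (v : 'rV[R]_n.+1) := N v^T.

Lemma N_lip a b : `|N a - N b| <= N (a - b).
Proof.
have h1 := ND (a - b) b; rewrite subrK in h1.
have h2 := ND (b - a) a; rewrite subrK -[N (b - a)]NN opprB in h2.
rewrite ler_norml; apply/andP; split; lra.
Qed.

Lemma g_lip v w : `|g v - g w| <= Kup * `|v - w|.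
Proof.
apply: le_trans (N_lip _ _) _; rewrite -linearB /=.
apply: le_trans (N_up _) _; rewrite /Kup mulr_suml; apply: ler_sum => i _.
rewrite mxE [X in _ <= X]mulrC ler_wpM2r ?N_ge0 //.
by apply: entry_le.
Qed.

Lemma g_cont : continuous g.
Proof.
move=> v; apply/(@cvgrPdist_le _ _ _ (nbhs v) (nbhs_filter v)) => eps eps0.
have K0 : 0 < Kup + 1 by rewrite ltr_wpDl // /Kup sumr_ge0 // => i _; exact: N_ge0.
have := @near_ball _ _ (v : 'rV[R]_n.+1) _ (divr_gt0 eps0 K0).
apply: filterS => w; rewrite -ball_normE /= => hw.
apply: le_trans (g_lip _ _) _.
apply: (@le_trans _ _ ((Kup + 1) * (eps / (Kup + 1)))).
  apply: ler_pM; [by rewrite /Kup sumr_ge0 // => i _; exact: N_ge0|by []|by rewrite lerDl|exact: ltW].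
by rewrite mulrC -mulrA mulVf ?mulr1 // gt_eqF.
Qed.

Lemma N_low : exists2 c : R, 0 < c & forall (x : 'cV[R]_n.+1) (i : 'I_n.+1), c * `|x i 0| <= N x.
Proof.
pose S := [set v : 'rV[R]_n.+1 | `|v| = 1].
pose v0 := (const_mx 1 : 'rV[R]_n.+1).
have v0nz : v0 != 0.
  by apply/eqP => /matrixP /(_ 0 0); rewrite !mxE; apply/eqP; exact: oner_neq0.
pose u := `|v0|^-1 *: v0.
have Su : S u by rewrite /S /u /= normrZ normfV normr_id mulVf // normr_eq0.
have cS : compact S.
  apply: bounded_closed_compact.
    by exists 1; split => // M M1 x Sx /=; rewrite Sx; exact: ltW.
  apply: (@preimage_closed _ R Num.norm [set 1]); [by move=> x _; exact: norm_continuous | exact: closed_eq].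
have [c Sc cmin] := EVT_min_rV (ex_intro _ u Su) cS (continuous_subspaceT g_cont).
have c1 : `|c| = 1 by move: Sc; rewrite inE.
have cgt0 : 0 < g c.
  apply: N_gt0; apply/eqP => /(congr1 trmx); rewrite trmxK trmx0 => c0.
  by move: c1; rewrite c0 normr0 => /eqP; rewrite eq_sym oner_eq0.
exists (g c) => // x i.
have [->|x0] := eqVneq x 0; first by rewrite mxE normr0 mulr0 N_ge0.
have xT0 : 0 < `|x^T| by rewrite normr_gt0; apply: contra x0 => /eqP/(congr1 trmx); rewrite trmxK trmx0 => ->.
have Sv : (`|x^T|^-1 *: x^T) \in S.
  by rewrite inE /S /= normrZ normfV normr_id mulVf // gt_eqF.
have := cmin _ Sv; rewrite /g linearZ /= trmxK NZ normfV normr_id ler_pdivlMl // => h.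
apply: le_trans h; rewrite mulrC ler_wpM2r ?(ltW cgt0) //.
have := entry_le x^T i; by rewrite mxE.
Qed.

Lemma unit_ex : exists x : 'cV[R]_n.+1, N x = 1.
Proof.
have e0 : e_ 0 != 0.
  by apply/eqP => /matrixP /(_ 0 0); rewrite !mxE !eqxx; apply/eqP; exact: oner_neq0.
exists ((N (e_ 0))^-1 *: e_ 0); rewrite NZ normfV ger0_norm ?N_ge0 // mulVf //; rewrite gt_eqF //; exact: N_gt0.
Qed.

Lemma Abound (A : 'M[R]_n.+1) : exists M, forall x, N (A *m x) <= M * N x.
Proof.
have [c c0 hc] := N_low.
exists (\sum_i ((\sum_j `|A i j|) / c * N (e_ i))) => x.
apply: le_trans (N_up _) _; rewrite mulr_suml; apply: ler_sum => i _.
rewrite mulrAC ler_wpM2r ?N_ge0 // mxE.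
apply: le_trans (ler_norm_sum _ _ _) _.
rewrite -mulrA mulr_suml; apply: ler_sum => j _.
rewrite normrM ler_wpM2l // ler_pdivlMl //; exact: hc.
Qed.

Definition nrm (A : 'M[R]_n.+1) := induced_norm N A.

Lemma nrm_ub A {x} : N x = 1 -> N (A *m x) <= nrm A.
Proof.
move=> x1; apply: ub_le_sup; last by exists x.
have [M hM] := Abound A; exists M => _ [y y1 <-]; have := hM y; by rewrite y1 mulr1.
Qed.

Lemma nrm_le A M : (forall x, N x = 1 -> N (A *m x) <= M) -> nrm A <= M.
Proof.
move=> h; apply: ge_sup.
  by have [x x1] := unit_ex; exists (N (A *m x)), x.
by move=> _ [y y1 <-]; exact: h.
Qed.

Lemma nrm_ge0 A : 0 <= nrm A.
Proof. have [x x1] := unit_ex; exact: (le_trans (N_ge0 _) (nrm_ub A x1)). Qed.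

Lemma nrm_mul A x : N (A *m x) <= nrm A * N x.
Proof.
have [->|x0] := eqVneq x 0; first by rewrite mulmx0 N0 mulr0.
have Nx : 0 < N x by exact: N_gt0.
have h : N ((N x)^-1 *: x) = 1 by rewrite NZ normfV ger0_norm ?N_ge0 // mulVf // gt_eqF.
have := nrm_ub A h; rewrite -scalemxAr NZ normfV ger0_norm ?N_ge0 // ler_pdivrMl //.
by rewrite mulrC.
Qed.

Lemma nrmD A B : nrm (A + B) <= nrm A + nrm B.
Proof.
apply: nrm_le => x x1; rewrite mulmxDl; apply: le_trans (ND _ _) _.
by apply: lerD; exact: nrm_ub.
Qed.

Lemma nrmZ a A : nrm (a *: A) <= `|a| * nrm A.
Proof.
apply: nrm_le => x x1; rewrite -scalemxAl NZ ler_wpM2l //; exact: nrm_ub.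
Qed.

Lemma nrm1 : nrm 1%:M = 1.
Proof.
apply/eqP; rewrite eq_le; apply/andP; split.
  by apply: nrm_le => x x1; rewrite mul1mx x1.
have [x x1] := unit_ex; have := nrm_ub 1%:M x1; by rewrite mul1mx x1.
Qed.

Definition q (A : 'M[R]_n.+1) (e : R) := (nrm (1%:M + e *: A) - 1) / e.

Lemma q_lb A e : 0 < e -> - nrm A <= q A e.
Proof.
move=> e0; have := nrmD (1%:M + e *: A) (- (e *: A)); rewrite addrK nrm1 -scaleNr.
move=> h; have := nrmZ (- e) A; rewrite normrN gtr0_norm // => h2.
rewrite /q ler_pdivlMr //; lra.
Qed.

Lemma q_mono A e1 e2 : 0 < e1 -> e1 <= e2 -> q A e1 <= q A e2.
Proof.
move=> e10 e12; have e20 : 0 < e2 by apply: lt_le_trans e12.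
pose t := e1 / e2.
have t0 : 0 < t by rewrite divr_gt0.
have t1 : t <= 1 by rewrite ler_pdivrMr // mul1r.
have hM : 1%:M + e1 *: A = (1 - t) *: 1%:M + t *: (1%:M + e2 *: A).
  rewrite scalerDr scalerA /t mulrAC -mulrA mulfV ?gt_eqF // mulr1 addrA; congr (_ + _).
  by rewrite scalerBl scale1r subrK.
have h : nrm (1%:M + e1 *: A) <= (1 - t) + t * nrm (1%:M + e2 *: A).
  rewrite hM; apply: le_trans (nrmD _ _) _; apply: lerD.
    by apply: le_trans (nrmZ _ _) _; rewrite nrm1 mulr1 ger0_norm // subr_ge0.
  by apply: le_trans (nrmZ _ _) _; rewrite gtr0_norm.
rewrite /q ler_pdivrMr //.
have -> : (nrm (1%:M + e2 *: A) - 1) / e2 * e1 = t * nrm (1%:M + e2 *: A) - t.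
  by rewrite /t; ring.
lra.
Qed.

Lemma mu_inf A : matrix_measure N A = inf (q A @` `]0, +oo[).
Proof.
apply: cvg_lim => //.
apply: (@nondecreasing_at_right_cvgr _ (q A) 0 (BInfty _ false)) => //.
  move=> x y xI yI xy; move: xI; rewrite in_itv /= andbT => x0; exact: q_mono.
by exists (- nrm A) => y [e]; rewrite /= in_itv /= andbT => e0 <-; exact: q_lb.
Qed.

Lemma mu_le_q A e : 0 < e -> matrix_measure N A <= q A e.
Proof.
move=> e0; rewrite mu_inf; apply: ge_inf.
  by exists (- nrm A) => y [x]; rewrite /= in_itv /= andbT => x0 <-; exact: q_lb.
by exists e => //; rewrite /= in_itv /= andbT.
Qed.

Lemma mu_adh A eps : 0 < eps -> exists2 e, 0 < e & q A e < matrix_measure N A + eps.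
Proof.
move=> eps0; rewrite mu_inf.
have [] := @inf_adherent _ (q A @` `]0, +oo[) eps eps0.
  split; first by exists (q A 1), 1 => //; rewrite /= in_itv /= andbT.
  by exists (- nrm A) => y [x]; rewrite /= in_itv /= andbT => x0 <-; exact: q_lb.
by move=> y [e]; rewrite /= in_itv /= andbT => e0 <- h; exists e.
Qed.

Local Notation mu := (matrix_measure N).

Lemma q_add A B e : 0 < e -> q (A + B) e <= q A (2 * e) + q B (2 * e).
Proof.
move=> e0.
have hM : 1%:M + e *: (A + B) =
  2^-1 *: (1%:M + (2 * e) *: A) + 2^-1 *: (1%:M + (2 * e) *: B).
  by apply/matrixP => i j; rewrite !mxE; field.
have h : nrm (1%:M + e *: (A + B)) <=
   2^-1 * nrm (1%:M + (2 * e) *: A) + 2^-1 * nrm (1%:M + (2 * e) *: B).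
  rewrite hM; apply: le_trans (nrmD _ _) _; apply: lerD; apply: le_trans (nrmZ _ _) _;
  by rewrite ger0_norm.
rewrite /q ler_pdivrMr //.
set X := nrm (1%:M + (2 * e) *: A) in h *; set Y := nrm (1%:M + (2 * e) *: B) in h *.
have -> : ((X - 1) / (2 * e) + (Y - 1) / (2 * e)) * e = 2^-1 * X + 2^-1 * Y - 1.
  by field; rewrite gt_eqF.
lra.
Qed.

Lemma mu_sub A B : mu (A + B) <= mu A + mu B.
Proof.
apply/ler_addgt0Pr => eps eps0.
have eps20 : 0 < eps / 2 by rewrite divr_gt0.
have [e1 e10 h1] := mu_adh A _ eps20.
have [e2 e20 h2] := mu_adh B _ eps20.
pose e := Num.min e1 e2 / 2.
have mgt0 : 0 < Num.min e1 e2 by rewrite lt_min e10 e20.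
have e0 : 0 < e by rewrite divr_gt0.
have he : 2 * e = Num.min e1 e2 by rewrite /e mulrC mulfVK ?pnatr_eq0.
have := q_add A B _ e0; rewrite he => h.
have m1 : Num.min e1 e2 <= e1 by rewrite ge_min lexx.
have m2 : Num.min e1 e2 <= e2 by rewrite ge_min lexx orbT.
have ha := q_mono A _ _ mgt0 m1.
have hb := q_mono B _ _ mgt0 m2.
have := mu_le_q (A + B) _ e0.
lra.
Qed.

Lemma mu_scalar_le c : mu c%:M <= c.
Proof.
pose e := (`|c| + 1)^-1.
have c1 : 0 < `|c| + 1 by rewrite ltr_wpDl.
have e0 : 0 < e by rewrite invr_gt0.
apply: le_trans (mu_le_q _ _ e0) _.
have hM : 1%:M + e *: c%:M = (1 + e * c) *: 1%:M :> 'M[R]_n.+1.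
  by apply/matrixP => i j; rewrite !mxE; case: (i == j); rewrite ?mulr1n ?mulr0n; ring.
have hpos : 0 <= 1 + e * c.
  have : `|e * c| < 1.
    by rewrite normrM gtr0_norm // /e mulrC ltr_pdivrMr // mul1r ltrDl.
  rewrite ltr_norml => /andP [h _]; lra.
rewrite /q hM ler_pdivrMr //.
have := nrmZ (1 + e * c) (1%:M : 'M[R]_n.+1); rewrite nrm1 mulr1 ger0_norm // => h.
lra.
Qed.

Lemma mu_diag_ge (d : 'rV[R]_n.+1) k : d 0 k <= mu (diag_mx d).
Proof.
apply/ler_addgt0Pr => eps eps0.
have [e e0 he] := mu_adh (diag_mx d) _ eps0.
apply: le_trans (ltW he).
have ek0 : e_ k != 0.
  by apply/eqP => /matrixP /(_ k 0); rewrite !mxE !eqxx; apply/eqP; exact: oner_neq0.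
have Nek : 0 < N (e_ k) by exact: N_gt0.
pose u := (N (e_ k))^-1 *: e_ k.
have u1 : N u = 1 by rewrite NZ normfV ger0_norm ?N_ge0 // mulVf // gt_eqF.
have hM : (1%:M + e *: diag_mx d) *m e_ k = (1 + e * d 0 k) *: e_ k.
  rewrite -colE; apply/matrixP => i j; rewrite !mxE ord1 eqxx andbT.
  by case: eqVneq => [->|_]; rewrite ?mulr1n ?mulr0n ?mulr1 ?mulr0 ?addr0.
have := nrm_ub (1%:M + e *: diag_mx d) u1.
rewrite /u -scalemxAr hM scalerA mulrC -scalerA NZ u1 mulr1 => h.
have h2 := ler_norm (1 + e * d 0 k).
rewrite /q ler_pdivlMr //; lra.
Qed.

Lemma max_ge (d : 'rV[R]_n.+1) i : d 0 i <= max_entry d.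
Proof. by rewrite /max_entry; exact: le_bigmax. Qed.

Lemma max_le (d : 'rV[R]_n.+1) x : (forall i, d 0 i <= x) -> max_entry d <= x.
Proof. by move=> h; rewrite /max_entry; apply: bigmax_le => // i _. Qed.

Definition H2 := forall d : 'rV[R]_n.+1, nonneg_row d -> mu (- diag_mx d) <= 0.

Lemma from2 : H2 -> forall d : 'rV[R]_n.+1, mu (diag_mx d) = max_entry d.
Proof.
move=> h2 d; pose m := max_entry d.
pose d' := \row_i (m - d 0 i).
have d'0 : nonneg_row d' by move=> i; rewrite mxE subr_ge0; exact: max_ge.
have hM : diag_mx d = - diag_mx d' + m%:M.
  apply/matrixP => i j; rewrite !mxE; case: eqVneq => [->|_];
  by rewrite ?mulr1n ?mulr0n ?mxE //; ring.
apply/eqP; rewrite eq_le; apply/andP; split.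
  rewrite hM; apply: le_trans (mu_sub _ _) _.
  have := h2 _ d'0; have := mu_scalar_le m; rewrite /m; lra.
by apply: max_le => i; exact: mu_diag_ge.
Qed.

Lemma from1 : orthant_monotonic N -> H2.
Proof.
move=> hom d d0.
have m0 : 0 <= max_entry d by apply: le_trans (max_ge d 0); exact: d0.
pose e := (max_entry d + 1)^-1.
have e0 : 0 < e by rewrite invr_gt0 ltr_wpDl.
apply: le_trans (mu_le_q _ _ e0) _.
suff h : nrm (1%:M + e *: - diag_mx d) <= 1.
  rewrite /q; apply: mulr_le0_ge0; first by lra.
  by rewrite invr_ge0 ltW.
apply: nrm_le => x x1; rewrite -[X in _ <= X]x1; apply: hom => i.
have hi : ((1%:M + e *: - diag_mx d) *m x) i 0 = (1 - e * d 0 i) * x i 0.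
  rewrite mulmxDl mul1mx -scalemxAl mulNmx mul_diag_mx !mxE; ring.
have ed : 0 <= 1 - e * d 0 i /\ 1 - e * d 0 i <= 1.
  have : e * d 0 i <= e * max_entry d by rewrite ler_wpM2l ?(ltW e0) // max_ge.
  have : e * max_entry d < 1 by rewrite /e mulrC ltr_pdivrMr ?ltr_wpDl // mul1r ltrDl.
  have := mulr_ge0 (ltW e0) (d0 i); split; lra.
case: ed => ed1 ed2.
rewrite hi; split.
  by rewrite -mulrA; apply: mulr_ge0 => //; rewrite -expr2; exact: sqr_ge0.
by rewrite normrM ger0_norm // ler_piMl.
Qed.

Definition H3 := forall d : 'rV[R]_n.+1, nonneg_row d -> mu (diag_mx d) = max_entry d.

Lemma from3 : H3 -> H2.
Proof.
move=> h3 d d0; pose m := max_entry d.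
pose d' := \row_i (m - d 0 i).
have d'0 : nonneg_row d' by move=> i; rewrite mxE subr_ge0; exact: max_ge.
have hM : - diag_mx d = diag_mx d' + (- m)%:M.
  apply/matrixP => i j; rewrite !mxE; case: eqVneq => [->|_];
  by rewrite ?mulr1n ?mulr0n ?mxE //; ring.
rewrite hM; apply: le_trans (mu_sub _ _) _.
rewrite h3 //; have := mu_scalar_le (- m).
have : max_entry d' <= m.
  apply: max_le => i; rewrite mxE; have := d0 i; lra.
lra.
Qed.

Definition H4 := exists A : 'M[R]_n.+1, forall d : 'rV[R]_n.+1, nonneg_row d ->
         mu (A - diag_mx d) < 0.

Lemma homog (d : 'rV[R]_n.+1) l : 0 < l -> l * mu (- diag_mx d) <= mu (- diag_mx (l *: d)).
Proof.
move=> l0; apply/ler_addgt0Pr => eps eps0.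
have [e e0 he] := mu_adh (- diag_mx (l *: d)) _ eps0.
apply: le_trans (ltW he).
have le0 : 0 < l * e by rewrite mulr_gt0.
have h := mu_le_q (- diag_mx d) _ le0.
have hM : 1%:M + e *: - diag_mx (l *: d) = 1%:M + (l * e) *: - diag_mx d.
  by apply/matrixP => i j; rewrite !mxE; case: eqVneq => _; rewrite ?mulr1n ?mulr0n; ring.
have -> : q (- diag_mx (l *: d)) e = l * q (- diag_mx d) (l * e).
  by rewrite /q hM; field; rewrite ?gt_eqF.
by rewrite ler_pM2l.
Qed.

Lemma from4 : H4 -> H2.
Proof.
move=> [A hA] d d0; rewrite leNgt; apply/negP => hpos.
have key : forall l, 0 < l -> l * mu (- diag_mx d) < mu (- A).
  move=> l l0.
  have ld0 : nonneg_row (l *: d) by move=> i; rewrite mxE mulr_ge0 // ltW.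
  have hM : - diag_mx (l *: d) = (A - diag_mx (l *: d)) + - A by rewrite addrC addKr.
  have h1 := homog d l l0.
  have h2 : mu (- diag_mx (l *: d)) <= mu (A - diag_mx (l *: d)) + mu (- A).
    by rewrite {1}hM; exact: mu_sub.
  have h3 := hA _ ld0.
  move: h1 h2 h3; clear.
  set a := mu (- diag_mx (l *: d)); set b := mu (A - diag_mx (l *: d)).
  set c := mu (- A); set z := mu (- diag_mx d); move=> h1 h2 h3; lra.
pose l := (`|mu (- A)| + 1) / mu (- diag_mx d).
have l0 : 0 < l by rewrite divr_gt0 // ltr_wpDl.
have := key l l0; rewrite /l mulrAC -mulrA mulfV ?gt_eqF // mulr1.
have := ler_norm (mu (- A)); lra.
Qed.
End S.

Local Close Scope classical_set_scope.

Theorem corollary1 (R : realType) (n : nat) (N : 'cV[R]_n.+1 -> R) :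
  is_vnorm N ->
  (orthant_monotonic N
   \/ (forall d : 'rV[R]_n.+1, nonneg_row d ->
         matrix_measure N (- diag_mx d) <= 0)
   \/ (forall d : 'rV[R]_n.+1, nonneg_row d ->
         matrix_measure N (diag_mx d) = max_entry d)
   \/ (exists A : 'M[R]_n.+1, forall d : 'rV[R]_n.+1, nonneg_row d ->
         matrix_measure N (A - diag_mx d) < 0)) ->
  forall d : 'rV[R]_n.+1, matrix_measure N (diag_mx d) = max_entry d.
Proof.
move=> hN H; apply: (@from2 R n N hN).
case: H => [h1|[h2|[h3|h4]]].
- exact: (@from1 R n N hN h1).
- exact: h2.
- exact: (@from3 R n N hN h3).
- exact: (@from4 R n N hN h4).
Qed.
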